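(* Suppose that $\mathbb{U}$ sends $\mathcal{H}_\mathcal{X}^-$ to $\mathcal{H}_Y^-$, so that $\mathbb{U} = U_0 + U_1 z^{-1} + \cdots + U_k z^{-k}$ for some non-negative integer $k$ and some linear maps $U_i: H^\bullet_{\mathrm{CR}}(\mathcal{X};\mathbb{C}) \to H^\bullet(Y;\mathbb{C})$. Then: (i) $U_0$ is grading-preserving; (ii) $U_0$ maps $\mathbf{1}_\mathcal{X}$ to $\mathbf{1}_Y$; (iii) $U_0$ maps $\rho \in H^2(\mathcal{X};\mathbb{C})$ to $\pi^\star\rho \in H^2(Y;\mathbb{C})$; (iv) $U_0$ identifies the orbifold Poincaré pairing on $H^\bullet_{\mathrm{CR}}(\mathcal{X};\mathbb{C})$ with the Poincaré pairing on $H^\bullet(Y;\mathbb{C})$.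
   Context: Let $\mathcal{X}$ be a Gorenstein orbifold (smooth Deligne–Mumford stack over $\mathbb{C}$) with projective coarse moduli space $X$ and trivial generic isotropy, and let $\pi: Y \to X$ be a crepant resolution. $H^\bullet_{\mathrm{CR}}(\mathcal{X};\mathbb{C})$ denotes Chen–Ruan orbifold cohomology, with Chen–Ruan product $\cup_{\mathrm{CR}}$ and orbifold Poincaré pairing. Let $\Lambda = \mathbb{C}[\![U_1,\ldots,U_s]\!]$ be the Novikov ring of $\mathcal{X}$. For $\mathcal{Z} = \mathcal{X}$ or $Y$, let $\mathcal{H}_\mathcal{Z} = H^\bullet_{\mathrm{CR}}(\mathcal{Z};\Lambda) \otimes \mathbb{C}(\!(z^{-1})\!)$ (with $\deg z = 2$), with symplectic form $\Omega_\mathcal{Z}(f,g) = \operatorname{Res}_{z=0}(f(-z),g(z))_\mathcal{Z}\,dz$, and Lagrangian subspaces $\mathcal{H}_\mathcal{Z}^+ = H^\bullet_{\mathrm{CR}}(\mathcal{Z};\Lambda)\otimes\mathbb{C}[z]$, $\mathcal{H}_\mathcal{Z}^- = z^{-1}H^\bullet_{\mathrm{CR}}(\mathcal{Z};\Lambda)\otimes\mathbb{C}[\![z^{-1}]\!]$; let $\mathcal{L}_\mathcal{Z} \subset \mathcal{H}_\mathcal{Z}$ be Givental's Lagrangian cone encoding genus-zero Gromov–Witten invariants. Assume (the Crepant Resolution Conjecture) that $\mathbb{U}: \mathcal{H}_\mathcal{X} \to \mathcal{H}_Y$ is a degree-preserving $\mathbb{C}(\!(z^{-1})\!)$-linear symplectic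 isomorphism with $\mathbb{U}(\mathcal{L}_\mathcal{X}) = \mathcal{L}_Y$ after analytic continuation, satisfying: (a) $\mathbb{U}(\mathbf{1}_\mathcal{X}) = \mathbf{1}_Y + O(z^{-1})$; (b) $\mathbb{U} \circ (\rho \cup_{\mathrm{CR}}) = (\pi^\star\rho \cup) \circ \mathbb{U}$ for every untwisted degree-two class $\rho \in H^2(\mathcal{X};\mathbb{C})$; (c) $\mathbb{U}(\mathcal{H}_\mathcal{X}^+) \oplus \mathcal{H}_Y^- = \mathcal{H}_Y$; (d) the matrix entries of $\mathbb{U}$ with respect to fixed homogeneous bases lie in $\mathbb{C}(\!(z^{-1})\!)$. *)

(* Defs.v *)
(* C is modelled as R[i] = complex R for R : realType. *)
From HB Require Import structures.
From mathcomp Require Import all_boot all_order all_algebra.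
From mathcomp Require Import reals.
From mathcomp Require Export complex.
Set Implicit Arguments. Unset Strict Implicit. Unset Printing Implicit Defensive.
Import Order.TTheory GRing.Theory Num.Theory.
Local Open Scope ring_scope.

(* Finite sum over the integer interval [lo, hi] (empty if hi < lo). *)
Definition isum (V : zmodType) (lo hi : int) (F : int -> V) : V :=
  \sum_(k < `|hi - lo|%N.+1 | lo <= hi) F (lo + (k : nat)%:Z).

(* A formal Laurent series in z^{-1} with coefficients in V (an element of
   V ⊗ C((z^{-1}))): lv s is the coefficient of z^s, and only finitely many
   positive powers of z occur (lv s = 0 for s > lvtop). *)
Record lvec (V : zmodType) := LVec {
  lv : int -> V;
  lvtop : int;
  lvtopP : forall s, lvtop < s -> lv s = 0 }.

Lemma lconst_subproof (V : zmodType) (v : V) :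
  forall s : int, 0 < s -> (fun t : int => if t == 0 then v else 0) s = 0.
Proof. by move=> s hs; rewrite /= gt_eqF. Qed.
Definition lconst (V : zmodType) (v : V) : lvec V :=
  @LVec V (fun t => if t == 0 then v else 0) 0 (@lconst_subproof V v).

(* z-linear extension of a C-linear map given by a matrix A (row-vector convention) *)
Lemma lmapm_subproof (K : fieldType) n k (A : 'M[K]_(n, k)) (f : lvec 'rV[K]_n) :
  forall s, lvtop f < s -> (fun t => lv f t *m A) s = 0.
Proof. by move=> s hs /=; rewrite (lvtopP hs) mul0mx. Qed.
Definition lmapm (K : fieldType) n k (A : 'M[K]_(n, k)) (f : lvec 'rV[K]_n)
  : lvec 'rV[K]_k := @LVec _ (fun t => lv f t *m A) (lvtop f) (@lmapm_subproof K n k A f).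

(* Action of a C((z^{-1}))-linear map with matrix U (entries in C((z^{-1})),
   row-vector convention: basis vector e_i |-> sum_j U_ij f_j) on f.
   (U f)_p = sum_{s + t = p} f_s U_t ; the result has top <= lvtop f + lvtop U. *)
Definition lapply (K : fieldType) n m (U : lvec 'M[K]_(n, m)) (f : lvec 'rV[K]_n)
  : int -> 'rV[K]_m :=
  fun p => isum (p - lvtop U) (lvtop f) (fun s => lv f s *m lv U (p - s)).

Definition pair (K : fieldType) n (eta : 'M[K]_n) (a b : 'rV[K]_n) : K :=
  (a *m eta *m b^T) 0 0.

(* Symplectic form Omega(f,g) = Res_{z=0} (f(-z), g(z)) dz
   = sum_{s + t = -1} (-1)^s (f_s, g_t), for f, g with coefficient functions
   F, G vanishing above tops tf, tg. *)
Definition omega (K : fieldType) n (eta : 'M[K]_n) (F G : int -> 'rV[K]_n)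
  (tf tg : int) : K :=
  isum (-1 - tg) tf (fun s => (-1) ^ s * pair eta (F s) (G (-1 - s))).

(* F : int -> 'rV_n (coefficients of z^s) is homogeneous of degree d,
   where the i-th basis vector has degree deg i and deg z = 2. *)
Definition homog (K : fieldType) n (deg : 'I_n -> nat) (d : int)
  (F : int -> 'rV[K]_n) : Prop :=
  forall s i, F s 0 i != 0 -> (deg i)%:Z + 2 * s = d.

(* F lies in H^- = z^{-1} H ⊗ C[[z^{-1}]] *)
Definition in_minus (K : fieldType) n (F : int -> 'rV[K]_n) : Prop :=
  forall s : int, 0 <= s -> F s = 0.

(* Main.v *)
Require Import Defs.
From HB Require Import structures.
From mathcomp Require Import all_boot all_order all_algebra.
From mathcomp Require Import reals complex.
From mathcomp Require Import zify.
Import Order.TTheory GRing.Theory Num.Theory.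
Local Open Scope ring_scope.

Lemma isum_single (V : zmodType) (lo hi c : int) (F : int -> V) :
  (forall s, s != c -> F s = 0) -> (~~ ((lo <= c) && (c <= hi)) -> F c = 0) ->
  isum lo hi F = F c.
Proof.
move=> H0 Hout; rewrite /isum.
case: (boolP ((lo <= c) && (c <= hi))) => [/andP[h1 h2]|hn].
  have hlh : lo <= hi by apply: le_trans h2.
  have hk0 : (`|c - lo|%N < `|hi - lo|%N.+1)%N by lia.
  rewrite hlh (bigD1 (Ordinal hk0)) //= big1 ?addr0.
  have -> : lo + (`|c - lo|%N)%:Z = c by lia.
  done.
  move=> k hk; apply: H0; apply/negP => /eqP hc.
  move: hk; rewrite -val_eqE /=; apply/negP/negPn/eqP; lia.
rewrite (Hout hn) big1 // => k _.
case: (eqVneq (lo + (k : nat)%:Z) c) => [->|hne]; first exact: Hout.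
exact: H0.
Qed.

Section Conc.
Variables (R : realType) (n m : nat) (U : lvec 'M[R[i]]_(n, m)).

Lemma lapply_conc (f : lvec 'rV[R[i]]_n) (c : int) :
  (forall t, t != c -> lv f t = 0) -> forall p, lapply U f p = lv f c *m lv U (p - c).
Proof.
move=> Hf p; rewrite /lapply; apply: (@isum_single _ _ _ c).
  by move=> s hs; rewrite Hf // mul0mx.
rewrite negb_and -!ltNge => /orP[h|h].
  by rewrite (@lvtopP _ U) ?mulmx0 //; move: h; rewrite !ltrBrDl addrC.
by rewrite (@lvtopP _ f) ?mul0mx.
Qed.
End Conc.
Arguments lapply_conc {R n m} U {f c}.

Lemma conc_subproof (V : zmodType) (c : int) (v : V) :
  forall s : int, c < s -> (fun t : int => if t == c then v else 0) s = 0.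
Proof. by move=> s hs; rewrite /= gt_eqF. Qed.
Definition conc (V : zmodType) (c : int) (v : V) : lvec V :=
  @LVec V (fun t => if t == c then v else 0) c (@conc_subproof V c v).

Arguments conc {V}.

Lemma pair0 (K : fieldType) n (eta : 'M[K]_n) b : pair eta 0 b = 0.
Proof. by rewrite /pair !mul0mx mxE. Qed.

Lemma delta_entry (K : fieldType) n m (A : 'M[K]_(n, m)) i j :
  (delta_mx (0:'I_1) i *m A) 0 j = A i j.
Proof. by rewrite -rowE mxE. Qed.

Theorem lemma5p2 (R : realType)
  (n m : nat) (degX : 'I_n -> nat) (degY : 'I_m -> nat)
  (oneX : 'rV[R[i]]_n) (oneY : 'rV[R[i]]_m)
  (etaX : 'M[R[i]]_n) (etaY : 'M[R[i]]_m)
  (r : nat) (incX : 'M[R[i]]_(r, n)) (piS : 'M[R[i]]_(r, m))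
  (cupX : 'rV[R[i]]_r -> 'M[R[i]]_n) (cupY : 'rV[R[i]]_m -> 'M[R[i]]_m)
  (hcupX1 : forall rho, oneX *m cupX rho = rho *m incX)
  (hcupY1 : forall c, oneY *m cupY c = c)
  (U : lvec 'M[R[i]]_(n, m))
  (Udeg : forall (d : int) (f : lvec 'rV[R[i]]_n),
      homog degX d (lv f) -> homog degY d (lapply U f))
  (Usymp : forall f g : lvec 'rV[R[i]]_n,
      omega etaY (lapply U f) (lapply U g) (lvtop f + lvtop U) (lvtop g + lvtop U)
      = omega etaX (lv f) (lv g) (lvtop f) (lvtop g))
  (Ua : lapply U (lconst oneX) 0 = oneY /\
        forall s : int, 0 < s -> lapply U (lconst oneX) s = 0)
  (Ub : forall (rho : 'rV[R[i]]_r) (f : lvec 'rV[R[i]]_n) (p : int),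
      lapply U (lmapm (cupX rho) f) p = lapply U f p *m cupY (rho *m piS))
  (Uminus : forall f : lvec 'rV[R[i]]_n, in_minus (lv f) -> in_minus (lapply U f)) :
  (exists k : nat, forall s : int,
      ((0 < s) -> lv U s = 0) /\ ((s < - (k%:Z)) -> lv U s = 0)) /\
  (forall i j, lv U 0 i j != 0 -> degX i = degY j) /\
  oneX *m lv U 0 = oneY /\
  (forall rho : 'rV[R[i]]_r, (rho *m incX) *m lv U 0 = rho *m piS) /\
  (forall a b : 'rV[R[i]]_n, pair etaY (a *m lv U 0) (b *m lv U 0) = pair etaX a b).
Proof.
have concP : forall (c : int) (v : 'rV[R[i]]_n) (t : int), t != c -> lv (conc c v) t = 0.
  by move=> c v t ht; rewrite /= (negbTE ht).
have constP : forall (v : 'rV[R[i]]_n) (t : int), t != 0 -> lv (lconst v) t = 0.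
  by move=> v t ht; rewrite /= (negbTE ht).
have Hdeg : forall s i j, lv U s i j != 0 -> (degY j)%:Z + 2 * s = (degX i)%:Z.
  move=> s i j hne.
  have hh : homog degX (degX i)%:Z (lv (conc 0 ((delta_mx (0:'I_1) i : 'rV[R[i]]_n)))).
    rewrite /homog => s' i' /=; case: (eqVneq s' 0) => [->|]; last by rewrite mxE eqxx.
    rewrite mxE; case: (eqVneq i' i) => [->|hi]; first by rewrite mulr0 addr0.
    by rewrite andbF eqxx.
  apply: (Udeg _ _ hh s j).
  by rewrite (lapply_conc U (concP _ _)) /= ?eqxx subr0 delta_entry.
have Hpos : forall s, 0 < s -> lv U s = 0.
  move=> s hs; apply/matrixP => i j; rewrite mxE.
  have := Uminus (conc (-1) ((delta_mx (0:'I_1) i : 'rV[R[i]]_n))).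
  have hin : in_minus (lv (conc (-1) ((delta_mx (0:'I_1) i : 'rV[R[i]]_n)))).
    by move=> t ht; apply: concP; apply/eqP; lia.
  move=> /(_ hin (s - 1)) H; have /H : 0 <= s - 1 by lia.
  rewrite (lapply_conc U (concP _ _)) /= ?eqxx.
  have -> : s - 1 - -1 = s by lia.
  by move=> E; rewrite -delta_entry E mxE.
have Hk : exists k : nat, forall s : int,
      ((0 < s) -> lv U s = 0) /\ ((s < - (k%:Z)) -> lv U s = 0).
  exists (\max_(j < m) degY j) => s; split; first exact: Hpos.
  move=> hs; apply/matrixP => i j; rewrite mxE.
  case: (eqVneq (lv U s i j) 0) => [//|hne].
  have := Hdeg _ _ _ hne.
  have : (degY j <= \max_(j < m) degY j)%N by apply: leq_bigmax.
  lia.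
split; first exact: Hk.
split; first by move=> i j /Hdeg; rewrite mulr0 addr0 => /eqP; rewrite eqz_nat => /eqP.
have Hone : oneX *m lv U 0 = oneY.
  by rewrite -Ua.1 (lapply_conc U (constP _)) /= ?eqxx subr0.
split; first exact: Hone.
split.
  move=> rho; rewrite -hcupX1.
  have := Ub rho (lconst oneX) 0.
  rewrite Ua.1 hcupY1 (@lapply_conc _ _ _ U _ 0); last first.
    by move=> t ht; rewrite /= (negbTE ht) mul0mx.
  by rewrite /= ?eqxx subr0.
move=> a b.
have := Usymp (lconst a) (conc (-1) b).
rewrite /omega [RHS](@isum_single _ _ _ 0); last 2 first.
- by move=> s hs; rewrite constP // pair0 mulr0.
- by move=> /negP[]; apply/andP; split => /=; lia.
rewrite /= expr0z mul1r => <-.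
rewrite (@isum_single _ _ _ 0).
- by rewrite /= expr0z mul1r (lapply_conc U (constP _)) (lapply_conc U (concP _ _)) /= ?eqxx !subr0 ?subrr.
- move=> s hs.
  rewrite (lapply_conc U (constP _)) (lapply_conc U (concP _ _)) /= ?eqxx subr0.
  have -> : -1 - s - -1 = - s by lia.
  case: (ltP 0 s) => h.
    by rewrite Hpos // mulmx0 pair0 mulr0.
  rewrite (Hpos (-s)) ?mulmx0; last by lia.
  by rewrite /pair trmx0 mulmx0 mxE mulr0.
- move=> hn.
  rewrite (lapply_conc U (constP _)) (lapply_conc U (concP _ _)) /= ?eqxx subr0.
  rewrite (@lvtopP _ U 0) ?mulmx0 ?pair0 ?mulr0 //.
  rewrite ltNge; apply: contra hn => h; apply/andP; split; lia.
Qed.
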